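(* For every natural number $n\geq 2$, the Alexandroff $n$-plicate $D_n(2^{\mathbb{N}})$ is a Rosenthal compactum which is premetric of degree at most $n$ but is not premetric of degree at most $n-1$.
   Context: A Rosenthal compactum is a topological space homeomorphic to a compact subset of $\mathcal{B}_1(\mathbb{N}^{\mathbb{N}})$, the space of first Baire class real functions on $\mathbb{N}^{\mathbb{N}}$ with the pointwise topology. A compact space $K$ is premetric of degree at most $m$ if there is a continuous surjection $f:K\to M$ onto a metrizable compact space $M$ with $|f^{-1}(x)|\leq m$ for all $x\in M$. For $n\geq 2$ and a Hausdorff space $X$, the Alexandroff $n$-plicate $D_n(X)$ is the set $X\times\{0,\ldots,n-1\}$ with the topology in which the points $(x,i)$ with $i\in\{1,\ldots,n-1\}$ are isolated and a point $(x,0)$ has basic neighbourhoods $\mathscr{U}\times\{0,\ldots,n-1\}\setminus\{(x,i):1\leq i\leq n-1\}$, where $\mathscr{U}$ ranges over neighbourhoods of $x$ in $X$. $2^{\mathbb{N}}$ is the Cantor space. *)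

(* Defs.v *)
From HB Require Import structures.
From mathcomp Require Import all_boot all_order all_algebra.
From mathcomp Require Import all_classical all_reals all_analysis.
Set Implicit Arguments. Unset Strict Implicit. Unset Printing Implicit Defensive.
Import Order.TTheory GRing.Theory Num.Theory.
Import numFieldTopology.Exports numFieldNormedType.Exports.
Local Open Scope classical_set_scope.

Definition baire_space : Type := prod_topology (fun _ : nat => nat).
HB.instance Definition _ := Choice.on baire_space.
HB.instance Definition _ := Topological.on baire_space.

Definition baire_class1 (R : realType) (f : baire_space -> R) : Prop :=
  exists g : nat -> baire_space -> R,
    (forall k : nat, continuous (g k)) /\
    (forall x : baire_space, ((fun k : nat => g k x) @ \oo) --> f x).

(** K is homeomorphic to a compact subset of B_1(N^N) with the pointwise
    topology (the function space carries the product topology). *)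
Definition rosenthal_compactum (R : realType) (K : topologicalType) : Prop :=
  exists e : K -> {ptws baire_space -> R},
    [/\ injective e, continuous e,
        (forall U : set K, open U ->
           exists V : set {ptws baire_space -> R}, open V /\ e @` U = range e `&` V),
        compact (range e)
      & forall x, baire_class1 (e x : baire_space -> R)].

Definition premetric_le (R : realType) (K : topologicalType) (m : nat) : Prop :=
  exists (M : pseudoMetricType R) (f : K -> M),
    [/\ hausdorff_space M, compact [set: M], continuous f,
        set_surj [set: K] [set: M] f
      & forall y : M, (f @^-1` [set y] #<= `I_m)%card].

Definition nplicate (n : nat) (X : topologicalType) : Type := (X * 'I_n)%type.

HB.instance Definition _ n (X : topologicalType) := Choice.on (nplicate n X).

Definition nplicate_open (n : nat) (X : topologicalType) (U : set (nplicate n X)) :=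
  forall (x : X) (i : 'I_n), nat_of_ord i = 0%N -> U (x, i) ->
    exists W : set X, nbhs x W /\
      (forall (y : X) (j : 'I_n), W y -> (y <> x \/ nat_of_ord j = 0%N) -> U (y, j)).

Lemma nplicate_openT n X : @nplicate_open n X setT.
Proof. by move=> x i _ _; exists setT; split => //; exact: filterT. Qed.

Lemma nplicate_openI n X : setI_closed (@nplicate_open n X).
Proof.
move=> A B oA oB x i i0 [Ax Bx].
have [WA [nA hA]] := oA x i i0 Ax; have [WB [nB hB]] := oB x i i0 Bx.
exists (WA `&` WB); split; first exact: filterI.
by move=> y j [? ?] h; split; [exact: hA|exact: hB].
Qed.

Lemma nplicate_open_bigU n X (I : Type) (f : I -> set (nplicate n X)) :
  (forall i, nplicate_open (f i)) -> nplicate_open (\bigcup_i f i).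
Proof.
move=> hf x i i0 [k _ fk].
have [W [nW hW]] := hf k x i i0 fk.
by exists W; split => // y j Wy h; exists k => //; exact: hW.
Qed.

HB.instance Definition _ n (X : topologicalType) :=
  isOpenTopological.Build (nplicate n X)
    (@nplicate_openT n X) (@nplicate_openI n X) (@nplicate_open_bigU n X).

(* Main.v *)
Require Import Defs.
From HB Require Import structures.
From mathcomp Require Import all_boot all_order all_algebra.
From mathcomp Require Import all_classical all_reals all_analysis.
From Stdlib Require Import Classical_Prop.
Set Implicit Arguments. Unset Strict Implicit. Unset Printing Implicit Defensive.
Import Order.TTheory GRing.Theory Num.Theory.
Import numFieldTopology.Exports numFieldNormedType.Exports.
Local Open Scope classical_set_scope.
Local Open Scope ring_scope.

Section Basics.
Variable m : nat.
Local Notation D := (nplicate m.+1 cantor_space).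

Lemma openD (U : set D) : open U -> nplicate_open U.
Proof. by []. Qed.
Lemma openD' (U : set D) : nplicate_open U -> open U.
Proof. by []. Qed.

Lemma cantor_T1 (x : cantor_space) : open (~` [set x]).
Proof.
apply: closed_openC; apply: accessible_closed_set1.
apply: hausdorff_accessible; exact: cantor_space_hausdorff.
Qed.

Lemma nbhs_D0 (x : cantor_space) (A : set D) : nbhs ((x, ord0) : D) A ->
  exists W : set cantor_space, nbhs x W /\ forall y j, W y -> (y <> x \/ j = ord0) -> A (y, j).
Proof.
move=> nA; have [B [oB Bx] BA] : exists2 B : set D, open_nbhs ((x, ord0) : D) B & B `<=` A by move: nA; rewrite nbhsE.
have [W [nW hW]] := openD oB (x:=x) (i:=ord0) erefl Bx.
exists W; split => // y j Wy h; apply: BA; apply: hW => //.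
by case: h => [h|->]; [left|right].
Qed.

Lemma nbhs_D0' (x : cantor_space) (A : set D) :
  (exists W : set cantor_space, nbhs x W /\ forall y j, W y -> (y <> x \/ j = ord0) -> A (y, j)) ->
  nbhs ((x, ord0) : D) A.
Proof.
move=> [W [nW hW]]; rewrite nbhsE.
have [W' [oW' W'x] W'W] : exists2 W', open_nbhs x W' & W' `<=` W.
  by move: nW; rewrite nbhsE => -[W' ? ?]; exists W'.
exists [set p : D | W' p.1 /\ (p.1 <> x \/ p.2 = ord0)]; last first.
  by move=> [y j] /= [/W'W Wy h]; exact: hW.
split; last by split => //; right.
apply: openD' => y i /= i0 [W'y hy].
have i0' : i = ord0 by apply: ord_inj.
have [yx|yx] := pselect (y = x).
  subst y; exists W'; split; first exact: open_nbhs_nbhs.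
  by move=> z j W'z [h|h]; split => //; [left|right; apply: ord_inj].
exists (W' `&` ~` [set x]); split.
  apply: filterI; first exact: open_nbhs_nbhs.
  by apply: open_nbhs_nbhs; split; [exact: cantor_T1|].
by move=> z j [W'z zx] _; split => //; left.
Qed.

Lemma nbhs_Di (x : cantor_space) (i : 'I_m.+1) (A : set D) : i != ord0 -> A (x, i) ->
  nbhs ((x, i) : D) A.
Proof.
move=> i0 Ai; rewrite nbhsE; exists [set ((x, i) : D)]; last by move=> p ->.
split => //; apply: openD' => y k k0 [_ ki].
by exfalso; move: i0; rewrite -ki; apply/negP/negPn/eqP/ord_inj.
Qed.

Lemma D_cont (Y : topologicalType) (g : D -> Y) :
  (forall (x : cantor_space) V, nbhs (g (x, ord0)) V -> exists W : set cantor_space, nbhs x W /\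
     forall y j, W y -> (y <> x \/ j = ord0) -> V (g (y, j))) ->
  continuous g.
Proof.
move=> h [x i] V /= nV.
have [e|i0] := eqVneq i ord0.
  subst i.
  apply: nbhs_D0'; have [W [nW hW]] := h x V nV; exists W; split => // y j Wy hy; exact: hW.
by apply: nbhs_Di => //; exact: nbhs_singleton nV.
Qed.


Lemma D_compact : compact [set: D].
Proof.
move=> F PF _.
have [x [_ cx]] := cantor_space_compact (fmap_proper_filter fst PF) (filterT : (fst @ F) setT).
have [[i [i0 hi]]|hn] := pselect (exists i : 'I_m.+1, i != ord0 /\ forall A, F A -> A (x, i)).
  exists (x, i); split => // A B FA nB; exists (x, i); split; first exact: hi.
  exact: nbhs_singleton nB.
have hB : forall i : 'I_m.+1, exists B : set D, F B /\ (i != ord0 -> ~ B (x, i)).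
  move=> i; have [->|i0] := eqVneq i ord0.
    by exists setT; split => //; exact: filterT.
  apply: NNPP => hnot; apply: hn; exists i; split => // A FA.
  by apply: NNPP => nA; apply: hnot; exists A; split.
have [Bf hBf] := choice hB.
exists (x, ord0); split => // A B FA nB.
have [W [nW hW]] := nbhs_D0 nB.
set C := A `&` [set p | forall i, Bf i p].
have FC : F C.
  apply: filterI => //; apply: filter_forall => i; exact: (hBf i).1.
have GC : (fst @ F) (fst @` C) by apply: (@filterS _ _ _ C) => // p Cp; exists p.
have [z [[[y j] Cp <-] Wz]] := cx _ _ GC nW.
exists (y, j); split; first exact: Cp.1.
apply: hW => //=.
have [->|j0] := eqVneq j ord0; first by right.
left => yx; subst y; exact: (hBf j).2 j0 (Cp.2 j).
Qed.

Lemma premetric_D (R : realType) : premetric_le R D m.+1.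
Proof.
exists (cantor_space : pseudoMetricType R), (fst : D -> cantor_space); split.
- exact: cantor_space_hausdorff.
- exact: cantor_space_compact.
- apply: D_cont => x V nV; exists V; split => // y j Vy _.
- by move=> x _; exists (x, ord0).
- move=> y; apply: (@card_le_trans _ _ _ ((fun k : nat => ((y, inord k) : D)) @` `I_m.+1)).
    apply: subset_card_le => -[z i] /= zy; exists (nat_of_ord i); first exact: ltn_ord.
    by rewrite inord_val zy.
  exact: card_image_le.
Qed.


Definition agree (L : nat) (a b : cantor_space) := forall k, (k < L)%N -> a k = b k.

Lemma cyl (W : set cantor_space) (x : cantor_space) : nbhs x W ->
  exists L, forall y, agree L y x -> W y.
Proof.
move=> nW; apply: NNPP => hn.
have hy : forall L, exists y : cantor_space, agree L y x /\ ~ W y.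
  move=> L; apply: NNPP => h; apply: hn; exists L => y ag.
  by apply: NNPP => nWy; apply: h; exists y.
have [ys hys] := choice hy.
have cv : ys @ \oo --> (x : cantor_space).
  apply/(@pointwise_cvgP nat bool) => t.
  apply: cvg_near_cst; exists t.+1 => // N /= tN; exact: (hys N).1.
have [N _ hN] := cv _ nW.
exact: (hys N).2 (hN N (leqnn N)).
Qed.

Lemma not_premetric (R : realType) : ~ premetric_le R D m.
Proof.
move=> [M [f [hM cM cf sf ff]]].
have noacc : forall e : R, 0 < e -> forall w : cantor_space, exists L,
    forall y, agree L y w -> y <> w -> forall i, ball (f (y, ord0)) e (f (y, i)).
  move=> e e0 w.
  have nb : nbhs (f (w, ord0)) (ball (f (w, ord0)) (e / 2)).
    by apply: nbhsx_ballx; rewrite divr_gt0.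
  have := cf (w, ord0) _ nb => /nbhs_D0 [W [nW hW]].
  have [L hL] := cyl nW.
  exists L => y ag yw i; apply: (@ball_splitl _ _ (f (w, ord0))).
    by apply: ball_sym; apply: (hW y ord0) => //; [exact: hL|right].
  by apply: ball_sym; apply: (hW y i) => //; [exact: hL|left].
have step : forall (k : nat) (s : nat * cantor_space), exists s' : nat * cantor_space,
    [/\ (s.1 < s'.1)%N, agree s.1 s.2 s'.2 &
      forall y, agree s'.1 y s'.2 -> forall i, ball (f (y, ord0)) (k.+1%:R^-1) (f (y, i))].
  move=> k [L z] /=.
  have [L0 hL0] := noacc (k.+1%:R^-1) (ltac:(by rewrite invr_gt0 ltr0n)) z.
  set N := maxn L L0.
  exists (N.+1, fun j => if j == N then ~~ z j else z j) => /=; split.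
  - by rewrite ltnS leq_maxl.
  - move=> j jL; have : (j < N)%N by apply: leq_trans jL (leq_maxl _ _).
    by rewrite ltn_neqAle => /andP[/negbTE -> _].
  - move=> y ag i; apply: hL0.
      move=> j jL; have jN : (j < N)%N by apply: leq_trans jL (leq_maxr _ _).
      by rewrite ag ?(ltn_neqAle j N) ?(ltn_trans jN) //; move: jN; rewrite ltn_neqAle => /andP[/negbTE -> _].
    move=> yz; have := ag N (ltnSn N); rewrite eqxx yz.
    by case: (z N).
pose sf' k := projT1 (choice (step k)).
have hsf k s0 : _ := projT2 (choice (step k)) s0.
pose s := fix s (k : nat) : nat * cantor_space :=
  if k is k'.+1 then sf' k' (s k') else (0%N, fun _ => false).
have sS k : s k.+1 = sf' k (s k) by [].
have Lmono : forall a b, (a <= b)%N -> ((s a).1 <= (s b).1)%N.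
  move=> a b /subnK <-; elim: (b - a)%N => // d IH.
  rewrite addSn sS; have [h _ _] := hsf (d + a)%N (s (d + a)%N).
  exact: leq_trans IH (ltnW h).
have Lge : forall k, (k <= (s k).1)%N.
  elim=> // k IH; rewrite sS; have [h _ _] := hsf k (s k).
  exact: leq_ltn_trans IH h.
have ag : forall a b, (a <= b)%N -> agree (s a).1 (s a).2 (s b).2.
  move=> a b /subnK <-; elim: (b - a)%N => // d IH.
  rewrite addSn sS; have [h h2 _] := hsf (d + a)%N (s (d + a)%N).
  move=> j ja; rewrite IH // h2 //.
  by apply: leq_trans ja _; apply: Lmono; rewrite leq_addl.
pose x : cantor_space := fun j => (s j.+1).2 j.
have agx : forall k, agree (s k).1 x (s k).2.
  move=> k j jk; rewrite /x.
  have [kj|jk'] := leqP k j.+1.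
    by rewrite (ag k j.+1 kj).
  rewrite (ag j.+1 k (ltnW jk')) //; exact: Lge.
have bx : forall k i, ball (f (x, ord0)) (k.+1%:R^-1) (f (x, i)).
  move=> k i; have [_ _ h] := hsf k (s k); apply: h.
  exact: (agx k.+1).
have eqx : forall i, f (x, i) = f (x, ord0).
  move=> i; apply/esym/(close_eq hM); rewrite ball_close => eps.
  have [N _ /(_ N)/(_ (leqnn _)) Ndel] := near_infty_natSinv_lt eps.
  by apply: (le_ball (ltW Ndel)); exact: bx.
have : (`I_m.+1 #<= `I_m)%card.
  apply: (@card_le_trans _ _ _ (f @^-1` [set f (x, ord0)])) => //.
  apply: (@card_le_trans _ _ _ ((fun k : nat => ((x, inord k) : D)) @` `I_m.+1)).
    rewrite (card_le_eqr (inj_card_eq _)) //.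
    move=> a b; rewrite !inE /= => aI bI [] /(congr1 val).
    by rewrite /= !inordK.
  by apply: subset_card_le => _ [k _ <-]; exact: eqx.
by rewrite card_le_II ltnn.
Qed.


Lemma coord_nbhs_c (x : cantor_space) i : nbhs x [set y : cantor_space | y i = x i].
Proof.
have h := @proj_continuous nat (fun _ => bool) i x.
exact: (h [set x i] (discrete_set1 _)).
Qed.

Lemma coord_nbhs_b (x : baire_space) i : nbhs x [set y : baire_space | y i = x i].
Proof.
have h := @proj_continuous nat (fun _ => nat) i x.
exact: (h [set x i] (discrete_set1 _)).
Qed.

Lemma cyl_nbhs_b (t : baire_space) L :
  nbhs t [set s : baire_space | forall j, (j < L)%N -> s j = t j].
Proof.
elim: L => [|L IH]; first by apply: filterS (filterT) => s _ j.
apply: filterS (filterI IH (coord_nbhs_b t L)) => s [h1 h2] j.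
by rewrite ltnS leq_eqVlt => /orP[/eqP ->|/h1].
Qed.

Definition iota (x : cantor_space) : baire_space := fun k => nat_of_bool (x k).

Lemma iota_inj : injective iota.
Proof.
move=> x y h; apply: functional_extensionality_dep => k.
by have := congr1 (fun g => g k) h; rewrite /iota; case: (x k); case: (y k).
Qed.

Section Ros.
Variable R : realType.

Definition E (p : D) : {ptws baire_space -> R} := fun t =>
  (nat_of_bool (p.1 (t 0%N)))%:R + (if asbool (t = iota p.1) then (nat_of_ord p.2)%:R else 0).

Lemma Et_cont (t : baire_space) : continuous (fun q : D => E q t).
Proof.
apply: D_cont => x V nV.
have key : exists W : set cantor_space, nbhs x W /\ forall y, W y -> y (t 0%N) = x (t 0%N) /\
    (y <> x -> t <> iota y).
  have [tx|tx] := pselect (t = iota x).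
    exists [set y | y (t 0%N) = x (t 0%N)]; split; first exact: coord_nbhs_c.
    by move=> y -> ; split => // yx ty; apply: yx; apply: iota_inj; rewrite -ty.
  have [k tk] : exists k, t k <> iota x k.
    apply: NNPP => h; apply: tx; apply: functional_extensionality_dep => k.
    by apply: NNPP => h'; apply: h; exists k.
  exists ([set y | y (t 0%N) = x (t 0%N)] `&` [set y | y k = x k]); split.
    exact: filterI (coord_nbhs_c _ _) (coord_nbhs_c _ _).
  move=> y [h1 h2]; split => // _ ty; apply: tk; rewrite ty /iota h2 //.
have [W [nW hW]] := key; exists W; split => // y j Wy hy.
have -> : E (y, j) t = E (x, ord0) t.
  rewrite /E /= (hW y Wy).1; congr (_ + _).
  case: hy => [yx|j0]; last by rewrite j0; do 2 case: asbool.
  by rewrite asboolF //; [case: asbool|exact: (hW y Wy).2].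
exact: nbhs_singleton nV.
Qed.

Lemma E_cont : continuous E.
Proof.
move=> p; have FF : Filter (E @ nbhs p) by apply: fmap_filter.
apply/(pointwise_cvgP (E p) FF) => t.
exact: Et_cont.
Qed.

Lemma E_inj : injective E.
Proof.
move=> [x i] [y j] h.
have hxy : x = y.
  apply: functional_extensionality_dep => k.
  pose t : baire_space := fun l => if l == 0%N then k else 2%N.
  have nt : forall z, t <> iota z.
    by move=> z tz; have := congr1 (fun g => g 1%N) tz; rewrite /t /iota /=; case: (z 1%N).
  have := congr1 (fun g => g t) h; rewrite /E /= !asboolF // !addr0.
  by move/eqP; rewrite eqr_nat; case: (x k); case: (y k).
subst y; congr (_, _).
have := congr1 (fun g => g (iota x)) h; rewrite /E /= !asboolT // => /addrI.
by move/eqP; rewrite eqr_nat => /eqP /ord_inj.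
Qed.

Lemma hausdorff_ptws : hausdorff_space {ptws baire_space -> R}.
Proof. by apply: hausdorff_product => _; exact: Rhausdorff. Qed.

Lemma E_compact (A : set D) : closed A -> compact (E @` A).
Proof.
move=> cA; apply: continuous_compact; first exact: continuous_subspaceT E_cont.
exact: subclosed_compact cA D_compact _.
Qed.

Lemma E_open (U : set D) : open U ->
  exists V : set {ptws baire_space -> R}, open V /\ E @` U = range E `&` V.
Proof.
move=> oU; exists (~` (E @` ~` U)); split.
  apply: closed_openC; apply: compact_closed; first exact: hausdorff_ptws.
  by apply: E_compact; exact: open_closedC.
apply/seteqP; split.
  move=> _ [p Up <-]; split; first by exists p.
  by move=> [q nUq /E_inj qp]; apply: nUq; rewrite qp.
move=> _ [[p _ <-] nE]; exists p => //.
by apply: NNPP => nUp; apply: nE; exists p.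
Qed.

Lemma E_baire (p : D) : baire_class1 (E p : baire_space -> R).
Proof.
pose g (k : nat) (t : baire_space) : R := (nat_of_bool (p.1 (t 0%N)))%:R +
  (if asbool (forall j, (j < k)%N -> t j = iota p.1 j) then (nat_of_ord p.2)%:R else 0).
exists g; split.
  move=> k t; apply: (near_cst_continuous (g k t)).
  apply: filterS (cyl_nbhs_b t k.+1) => s hs.
  rewrite /g (hs 0%N) //; congr (_ + _).
  have e : (forall j, (j < k)%N -> s j = iota p.1 j) = (forall j, (j < k)%N -> t j = iota p.1 j).
    apply: propext; split => h j jk.
      by rewrite -(hs j (ltnW jk)); exact: h.
    by rewrite (hs j (ltnW jk)); exact: h.
  by rewrite e.
move=> t; apply: cvg_near_cst.
have [tx|tx] := pselect (t = iota p.1).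
  exists 0%N => // k _ /=; rewrite /g /E /= !asboolT //.
  by move=> j _; rewrite tx.
have [k tk] : exists k, t k <> iota p.1 k.
  apply: NNPP => h; apply: tx; apply: functional_extensionality_dep => k.
  by apply: NNPP => h'; apply: h; exists k.
exists k.+1 => // l /= kl; rewrite /g /E /= !asboolF //.
by move=> h; apply: tk; apply: h.
Qed.

Lemma rosenthal_D : rosenthal_compactum R D.
Proof.
exists E; split.
- exact: E_inj.
- exact: E_cont.
- exact: E_open.
- by apply: E_compact; exact: closedT.
- exact: E_baire.
Qed.

End Ros.

End Basics.

Theorem mainTheorem8 (R : realType) (n : nat) : (2 <= n)%N ->
  [/\ rosenthal_compactum R (nplicate n cantor_space),
      premetric_le R (nplicate n cantor_space) n
    & ~ premetric_le R (nplicate n cantor_space) n.-1].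
Proof.
case: n => [|m] // _; split.
- exact: rosenthal_D.
- exact: premetric_D.
- exact: not_premetric.
Qed.
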